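(* Fix integers $k\ge 1$ and a real $\Delta>0$. For $n\ge k$ let $m=m(n)=\lfloor \Delta n\rfloor$ and let $V=(V_1,\dots,V_m)\sim\mathbf{P}_{\text{unif}}$. Then there is a sequence $\epsilon_n\to 0$ (as $n\to\infty$, depending only on $k$ and $\Delta$) such that for all $n\ge k$, $$\frac{\mathbf{E}[Z(V)^2]}{\mathbf{E}[Z(V)]^2}\le 1+\epsilon_n+\frac{1}{\mathbf{E}[Z(V)]}.$$
   Context: A $k$-flat of $\mathbb{F}_2^n$ is an affine subspace of dimension $n-k$; equivalently a set $\{x\in\mathbb{F}_2^n : \ell_i(x)=\varepsilon_i \ \forall i\in[k]\}$ where $\ell_1,\dots,\ell_k$ are linearly independent linear forms on $\mathbb{F}_2^n$ and $\varepsilon_1,\dots,\varepsilon_k\in\mathbb{F}_2$. Let $q_0$ be the uniform distribution on the set of all $k$-flats of $\mathbb{F}_2^n$, and $\mathbf{P}_{\text{unif}}:=q_0^{\otimes m}$ (i.e. $V_1,\dots,V_m$ i.i.d. uniform $k$-flats). For $V=(V_1,\dots,V_m)$, let $\mathcal{S}(V)=\mathbb{F}_2^n\setminus\bigcup_{j=1}^m V_j$ and $Z(V)=|\mathcal{S}(V)|$. Expectations are under $\mathbf{P}_{\text{unif}}$. *)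

(* Defs.v *)
From HB Require Import structures.
From mathcomp Require Import all_boot all_order all_algebra.
Set Implicit Arguments. Unset Strict Implicit. Unset Printing Implicit Defensive.
Import Order.TTheory GRing.Theory Num.Theory.
Local Open Scope ring_scope.

Definition pt (n : nat) := 'rV['F_2]_n.

(* The set of all k-flats of F_2^n: sets {x | x *m L = e} where the k columns of
   L : 'M_(n,k) are linearly independent linear forms (rank L = k) and e : 'rV_k. *)
Definition flats (n k : nat) : {set {set pt n}} :=
  [set A : {set pt n} | [exists L : 'M['F_2]_(n, k), exists e : 'rV['F_2]_k,
      (\rank L == k)%N && (A == [set x : pt n | x *m L == e])]].

(* Sample space of P_unif = q0^{m}: m-tuples of k-flats (uniform on this set). *)
Definition configs (n k m : nat) : {set {ffun 'I_m -> {set pt n}}} :=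
  [set V : {ffun 'I_m -> {set pt n}} | [forall j, V j \in flats n k]].

Definition Zcount (n m : nat) (V : {ffun 'I_m -> {set pt n}}) : nat :=
  #|~: \bigcup_(j < m) V j|.

Definition EZpow (R : numFieldType) (n k m p : nat) : R :=
  ((\sum_(V in configs n k m) ((Zcount V) ^ p)%N)%:R / (#|configs n k m|)%:R)%R.

(* Main.v *)
Require Import Defs.
From HB Require Import structures.
From mathcomp Require Import all_boot all_order all_algebra.
From mathcomp Require Import mxabelem zify ring.
Set Implicit Arguments. Unset Strict Implicit. Unset Printing Implicit Defensive.
Import Order.TTheory GRing.Theory Num.Theory.

Section RingPart.
Local Open Scope ring_scope.

Lemma flat_pre (n k : nat) (M : 'M['F_2]_n) (b : pt n) (A : {set pt n}) :
  M \in unitmx -> A \in flats n k -> [set x : pt n | x *m M + b \in A] \in flats n k.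
Proof.
move=> Mu; rewrite !inE => /existsP[L /existsP[e /andP[rL /eqP ->]]].
apply/existsP; exists (M *m L); apply/existsP; exists (e - b *m L).
rewrite eqmxMfull ?row_full_unit // rL /=; apply/eqP/setP => x; rewrite !inE.
by rewrite mulmxDl mulmxA -[RHS](inj_eq (addIr (b *m L))) subrK.
Qed.

Lemma pre_inj (n : nat) (M : 'M['F_2]_n) (b : pt n) :
  M \in unitmx -> injective (fun A : {set pt n} => [set x : pt n | x *m M + b \in A]).
Proof.
move=> Mu A B /setP eAB; apply/setP => y.
have := eAB ((y - b) *m invmx M); rewrite !inE mulmxKV // subrK //.
Qed.

Lemma flat_card (n k : nat) (A : {set pt n}) :
  A \in flats n k -> #|A| = (#|{: 'F_2}| ^ (n - k))%N.
Proof.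
rewrite inE => /existsP[L /existsP[e /andP[rL /eqP ->]]].
have /submxP[x0 ex0] : (e <= L)%MS by apply: submx_full; exact: rL.
have -> : (n - k)%N = \rank (kermx L) by rewrite mxrank_ker (eqP rL).
rewrite -card_rowg.
have -> : [set x : pt n | x *m L == e] = [set x0 + z | z in rowg (kermx L)].
  apply/setP => x; rewrite inE; apply/eqP/imsetP.
    move=> xL; exists (x - x0); last by rewrite addrC subrK.
    by rewrite inE sub_kermx mulmxBl xL ex0 subrr.
  by move=> [z]; rewrite inE sub_kermx => /eqP z0 ->; rewrite mulmxDl z0 addr0 ex0.
by rewrite card_imset //; apply: addrI.
Qed.

Lemma exM (n : nat) (v w : pt n) : v != 0 -> w != 0 ->
  exists2 M : 'M['F_2]_n, M \in unitmx & v *m M = w.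
Proof.
have key : forall u : pt n, u != 0 -> exists2 Q : 'M['F_2]_n, Q \in unitmx &
    u = pid_mx 1 *m Q.
  move=> u u0; have := mulmx_ebase u; rewrite rank_rV u0 /=.
  rewrite [col_ebase u]mx11_scalar mul_scalar_mx -scalemxAl scalemxAr => <-.
  exists ((col_ebase u) 0 0 *: row_ebase u) => //.
  rewrite unitmxZ ?row_ebase_unit //.
  by have := col_ebase_unit u; rewrite unitmxE det_mx11.
move=> /key[Q Qu ->] /key[P Pu ->].
exists (invmx Q *m P); first by rewrite unitmx_mul unitmx_inv Qu Pu.
by rewrite !mulmxA mulmxK.
Qed.

End RingPart.

Lemma cardsum (T : finType) (D : {pred T}) (P : pred T) :
  #|[set x in D | P x]| = \sum_(x in D) P x.
Proof.
rewrite -sum1_card big_mkcond [RHS]big_mkcond /=; apply: eq_bigr => x _.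
by rewrite !inE; case: (x \in D); case: (P x).
Qed.

Lemma cardsumT (T : finType) (D : {set T}) : #|D| = \sum_x (x \in D).
Proof.
rewrite -sum1_card big_mkcond /=; apply: eq_bigr => x _; by case: (x \in D).
Qed.

Lemma count_inv n k (M : 'M['F_2]_n) (b : pt n) (Q : pred {set pt n}) :
  M \in unitmx ->
  #|[set A in flats n k | Q [set x : pt n | (x *m M + b)%R \in A]]| =
  #|[set A in flats n k | Q A]|.
Proof.
move=> Mu; set f := fun A : {set pt n} => [set x : pt n | (x *m M + b)%R \in A].
have finj : injective f by exact: pre_inj.
have fF : f @: flats n k = flats n k.
  apply/eqP; rewrite eqEcard card_imset // leqnn andbT.
  by apply/subsetP => B /imsetP[A AF ->]; exact: flat_pre.
rewrite -(card_imset _ finj); apply: eq_card => B; rewrite [RHS]inE.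
apply/imsetP/andP.
  by move=> [A]; rewrite inE => /andP[AF QA] ->; split=> //; rewrite -fF imset_f.
move=> [BF QB]; move: BF; rewrite -{1}fF => /imsetP[A AF eB].
by exists A => //; rewrite inE AF; move: QB; rewrite eB.
Qed.

Definition cc n k (x : pt n) := #|[set A in flats n k | x \in A]|.
Definition dd n k (x y : pt n) := #|[set A in flats n k | (x \in A) && (y \in A)]|.

Lemma cc_const n k (x x' : pt n) : cc k x = cc k x'.
Proof.
rewrite /cc -(@count_inv n k (1%:M)%R (x - x')%R (fun B => x' \in B)) ?unitmx1 //.
by apply: eq_card => A; rewrite !inE mulmx1 addrC subrK.
Qed.

Lemma dd_const n k (x y x' y' : pt n) : x != y -> x' != y' -> dd k x y = dd k x' y'.
Proof.
move=> nxy nxy'.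
have [M Mu eM] : exists2 M : 'M['F_2]_n, M \in unitmx & ((y' - x') *m M)%R = (y - x)%R by apply: exM; rewrite subr_eq0 eq_sym.
rewrite /dd -(@count_inv n k M (x - x' *m M)%R (fun B => (x' \in B) && (y' \in B))) //.
apply: eq_card => A; rewrite !inE addrC subrK.
by rewrite addrCA -mulmxBl eM addrC subrK.
Qed.

Lemma sum_cc n k (s : nat) : (forall A, A \in flats n k -> #|A| = s) ->
  \sum_(x : pt n) cc k x = (#|flats n k| * s)%N.
Proof.
move=> hs; rewrite /cc; under eq_bigr do rewrite cardsum.
rewrite exchange_big /= -sum_nat_const; apply: eq_bigr => A AF.
by rewrite -(hs A AF) cardsumT.
Qed.

Lemma sum_dd n k (s : nat) (x : pt n) : (forall A, A \in flats n k -> #|A| = s) ->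
  \sum_(y : pt n) dd k x y = (cc k x * s)%N.
Proof.
move=> hs; rewrite /dd /cc; under eq_bigr do rewrite cardsum.
rewrite exchange_big /= cardsum big_distrl /=; apply: eq_bigr => A AF.
rewrite -(hs A AF) cardsumT big_distrr /=; apply: eq_bigr => y _.
by case: (x \in A); case: (y \in A).
Qed.

Lemma arith (P N s c d : nat) : P * c = N * s -> c + (P - 1) * d = c * s ->
  s <= P -> 2 <= P -> d * N <= c * c.
Proof.
move=> h1 h2 h3 h4.
have [s0|spos] := posnP s.
  move: h1; rewrite s0 muln0 => /eqP; rewrite muln_eq0 => /orP[/eqP|/eqP c0]; first lia.
  by move: h2; rewrite c0 add0n => /eqP; rewrite muln_eq0 => /orP[/eqP|/eqP ->]; lia.
rewrite -(@leq_pmul2l ((P - 1) * s)); last by rewrite muln_gt0; apply/andP; split; lia.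
have e1 : (P - 1) * s * (d * N) = (P - 1) * d * (N * s) by nia.
rewrite e1 -h1.
have e2 : (P - 1) * d = c * s - c by rewrite -h2 addKn.
rewrite e2.
nia.
Qed.

Definition aa n k (x : pt n) := #|[set A in flats n k | x \notin A]|.
Definition aa2 n k (x y : pt n) := #|[set A in flats n k | (x \notin A) && (y \notin A)]|.

Lemma aa_cc n k (x : pt n) : aa k x + cc k x = #|flats n k|.
Proof.
rewrite /aa /cc !cardsum -big_split /= -sum1_card; apply: eq_bigr => A _.
by case: (x \in A).
Qed.

Lemma aa2_dd n k (x y : pt n) : aa2 k x y + cc k x + cc k y = #|flats n k| + dd k x y.
Proof.
rewrite /aa2 /cc /dd !cardsum -!big_split /= -sum1_card -big_split /=.
apply: eq_bigr => A _; by case: (x \in A); case: (y \in A).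
Qed.

Lemma aa2_diag n k (x : pt n) : aa2 k x x = aa k x.
Proof. by apply: eq_card => A; rewrite !inE andbb. Qed.

Lemma key n k (x y : pt n) : x != y -> aa2 k x y * #|flats n k| <= aa k x * aa k y.
Proof.
move=> nxy.
set N := #|flats n k|; set c := cc k x; set d := dd k x y.
set s := (#|{: 'F_2}| ^ (n - k))%N; set P := #|{: pt n}|.
have hs : forall A, A \in flats n k -> #|A| = s by move=> A; exact: flat_card.
have cy : cc k y = c by exact: cc_const.
have h1 : P * c = N * s.
  rewrite -(sum_cc hs) (eq_bigr (fun _ => c)) ?sum_nat_const //.
  by move=> z _; exact: cc_const.
have h2 : c + (P - 1) * d = c * s.
  have ddx : dd k x x = c by apply: eq_card => A; rewrite !inE andbb.
  rewrite -(sum_dd x hs) (bigD1 x) //= ddx.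
  congr (_ + _); rewrite (eq_bigr (fun _ => d)) ?sum_nat_const.
    by rewrite cardC1 subn1.
  move=> z zx; apply: dd_const; by rewrite // eq_sym.
have h3 : s <= P.
  by rewrite /s /P card_mx mul1n leq_pexp2l ?leq_subr // card_Fp.
have h4 : 2 <= P.
  by have := max_card [set x; y]; rewrite cards2 nxy.
have hd := arith h1 h2 h3 h4.
have ha := aa_cc k x; have ha' := aa_cc k y; have h2d := aa2_dd k x y.
rewrite -/N -/c in ha; rewrite -/N cy in ha'; rewrite -/N -/c cy -/d in h2d.
nia.
Qed.

Lemma sum_configs n k m (P : pred {set pt n}) :
  \sum_(V in configs n k m) [forall j, P (V j)] = #|[set A in flats n k | P A]| ^ m.
Proof.
rewrite -cardsum; transitivity #|ffun_on_mem 'I_m (mem [set A in flats n k | P A])|;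
  last by rewrite card_ffun_on card_ord.
apply: eq_card => V.
rewrite !inE; apply/andP/ffun_onP.
  move=> [/forallP h1 /forallP h2] j; rewrite inE; exact/andP.
by move=> h; split; apply/forallP => j; have := h j; rewrite inE => /andP[].
Qed.

Lemma card_configs n k m : #|configs n k m| = #|flats n k| ^ m.
Proof.
transitivity #|ffun_on_mem 'I_m (mem (flats n k))|; last by rewrite card_ffun_on card_ord.
apply: eq_card => V.
by rewrite !inE; apply/forallP/ffun_onP.
Qed.

Lemma Zcount_sum n m (V : {ffun 'I_m -> {set pt n}}) :
  Zcount V = \sum_x [forall j, x \notin V j].
Proof.
rewrite /Zcount cardsumT; apply: eq_bigr => x _; congr nat_of_bool.
rewrite in_setC; case: (boolP (x \in \bigcup_(j < m) V j)) => [/bigcupP[j _ xj]|nx] /=.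
  by symmetry; apply/forallP => h; have := h j; rewrite xj.
by symmetry; apply/forallP => j; apply: contra nx => xj; apply/bigcupP; exists j.
Qed.

Lemma S1 n k m : \sum_(V in configs n k m) Zcount V ^ 1 = \sum_(x : pt n) aa k x ^ m.
Proof.
rewrite (eq_bigr (fun V : {ffun 'I_m -> {set pt n}} => \sum_(x : pt n) [forall j, x \notin V j])); last first.
  by move=> V _; rewrite expn1 Zcount_sum.
rewrite exchange_big /=; apply: eq_bigr => x _.
by rewrite (sum_configs k m (fun A => x \notin A)).
Qed.

Lemma S2 n k m : \sum_(V in configs n k m) Zcount V ^ 2 = \sum_(x : pt n) \sum_(y : pt n) aa2 k x y ^ m.
Proof.
rewrite (eq_bigr (fun V : {ffun 'I_m -> {set pt n}} => \sum_(x : pt n) \sum_(y : pt n) [forall j, x \notin V j] * [forall j, y \notin V j])); last first.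
  by move=> V _; rewrite expnS expn1 Zcount_sum big_distrl /=; apply: eq_bigr => x _; rewrite big_distrr.
rewrite exchange_big /=; apply: eq_bigr => x _.
rewrite exchange_big /=; apply: eq_bigr => y _.
rewrite -(sum_configs k m (fun A => (x \notin A) && (y \notin A))).
apply: eq_bigr => V _.
rewrite mulnb; congr nat_of_bool; symmetry.
apply/forallP/andP => [h|[/forallP h1 /forallP h2] j].
  by split; apply/forallP => j; have /andP[] := h j.
by rewrite h1 h2.
Qed.

Lemma nat_ineq n k m :
  #|flats n k| ^ m * \sum_(x : pt n) \sum_(y : pt n) aa2 k x y ^ m <=
  #|flats n k| ^ m * \sum_(x : pt n) aa k x ^ m +
  (\sum_(x : pt n) aa k x ^ m) * (\sum_(x : pt n) aa k x ^ m).
Proof.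
set S := \sum_(x : pt n) aa k x ^ m.
rewrite [X in X <= _]big_distrr [X in _ <= X + _]big_distrr [X in _ <= _ + X]big_distrl.
rewrite -big_split /=; apply: leq_sum => x _.
rewrite big_distrr /= /S [X in _ <= _ + X]big_distrr /=.
rewrite (bigD1 x) //= [X in _ <= _ + X](bigD1 x) //= aa2_diag addnA leq_add //.
  exact: leq_addr.
apply: leq_sum => y yx; rewrite -expnMn -expnMn.
move: S; case: m => [|m] S; first by [].
rewrite leq_exp2r // mulnC; apply: key; by rewrite eq_sym.
Qed.

Local Open Scope ring_scope.

Theorem mainTheorem2 (R : archiRealFieldType) (k : nat) (Delta : R) :
  (1 <= k)%N -> 0 < Delta ->
  exists eps : nat -> R,
    (forall e : R, 0 < e -> exists N : nat, forall n : nat, (N <= n)%N -> `|eps n| < e) /\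
    (forall n : nat, (k <= n)%N ->
       let m := Num.truncn (Delta * n%:R) in
       EZpow R n k m 2 / (EZpow R n k m 1) ^+ 2
         <= 1 + eps n + (EZpow R n k m 1)^-1).
Proof.
move=> _ _; exists (fun=> 0); split.
  by move=> e e0; exists 0%N => n _; rewrite normr0.
move=> n _; cbv zeta; set m := Num.truncn _; rewrite /EZpow S1 S2 card_configs addr0.
have hin := nat_ineq n k m.
set D := (#|flats n k| ^ m)%N in hin *.
set s1 := (\sum_(x : pt n) aa k x ^ m)%N in hin *.
set s2 := (\sum_(x : pt n) \sum_(y : pt n) aa2 k x y ^ m)%N in hin *.
have hR : (D%:R * s2%:R <= D%:R * s1%:R + s1%:R * s1%:R :> R).
  by rewrite -!natrM -natrD ler_nat.
have [D0|Dp] := posnP D.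
  by rewrite D0 !invr0 !mulr0 expr0n /= invr0 mulr0 addr0 ler01.
have [S0|Sp] := posnP s1.
  by rewrite S0 !mul0r expr0n /= invr0 mulr0 addr0 ler01.
have Dr : (D%:R : R) != 0 by rewrite pnatr_eq0 -lt0n.
have Sr : (s1%:R : R) != 0 by rewrite pnatr_eq0 -lt0n.
have -> : s2%:R / D%:R / (s1%:R / D%:R) ^+ 2 = (D%:R * s2%:R) / (s1%:R * s1%:R) :> R.
  by field; rewrite Dr Sr.
rewrite ler_pdivrMr; last by rewrite mulr_gt0 // ltr0n.
apply: (le_trans hR); rewrite le_eqVlt; apply/orP; left; apply/eqP.
field; rewrite ?Dr ?Sr //.
Qed.
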